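(* Let $N\ge3$, let $A,B$ be real constants, let $a(t)$ be a nonvanishing $C^1$ function on a time interval, and let $f\ge0$ be a $C^1$ function on $\mathbb{R}$. Then \[ \rho(t,\vec x)=\frac{1}{a^2(t)}f\Big(\frac{Ax_1+Bx_2}{a(t)}\Big),\qquad \vec u(t,\vec x)=\frac{\dot a(t)}{a(t)}\big(x_1,\,x_2,\,x_1,\,\dots,\,x_1\big) \] (with $u_i=\frac{\dot a}{a}x_1$ for $3\le i\le N$) satisfy the continuity equation $\rho_t+\nabla\cdot(\rho\vec u)=0$ in $\mathbb{R}^N$. *)

(* Defs.v *)
From Stdlib Require Import Reals.
From Coquelicot Require Import Coquelicot.
Open Scope R_scope.

(* Points of R^N are represented as x : nat -> R; coordinate x_{i+1}
   of the paper is x i (0-indexed), only x 0 .. x (N-1) are relevant. *)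

Definition upd (x : nat -> R) (i : nat) (s : R) : nat -> R :=
  fun j => if Nat.eqb j i then s else x j.

Definition ex_partial (F : (nat -> R) -> R) (i : nat) (x : nat -> R) : Prop :=
  ex_derive (fun s => F (upd x i s)) (x i).
Definition partial (F : (nat -> R) -> R) (i : nat) (x : nat -> R) : R :=
  Derive (fun s => F (upd x i s)) (x i).

Definition in_interval (T0 T1 : Rbar) (t : R) : Prop :=
  Rbar_lt T0 t /\ Rbar_lt t T1.

Definition rho (a f : R -> R) (A B : R) (t : R) (x : nat -> R) : R :=
  / (a t) ^ 2 * f ((A * x 0%nat + B * x 1%nat) / a t).

Definition vel (a : R -> R) (i : nat) (t : R) (x : nat -> R) : R :=
  Derive a t / a t * (if Nat.eqb i 1 then x 1%nat else x 0%nat).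

(* Main.v *)
Require Import Defs.
From Stdlib Require Import Reals Lra Lia.
From Coquelicot Require Import Coquelicot.
Open Scope R_scope.

Lemma sum2 (g : nat -> R) : (forall i, (2 <= i)%nat -> g i = 0) ->
  forall n, sum_f_R0 g (S n) = g 0%nat + g 1%nat.
Proof.
  intros H n; induction n as [|n IH]; simpl; auto.
  simpl in IH; rewrite IH, (H (S (S n))) by lia; ring.
Qed.

Theorem lemma7 (N : nat) (HN : (3 <= N)%nat) (A B : R) (T0 T1 : Rbar)
  (HT : Rbar_lt T0 T1) (a f : R -> R)
  (Ha_C1 : forall t, in_interval T0 T1 t ->
             ex_derive a t /\ continuous (Derive a) t)
  (Ha_nz : forall t, in_interval T0 T1 t -> a t <> 0)
  (Hf_C1 : forall y, ex_derive f y /\ continuous (Derive f) y)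
  (Hf_nn : forall y, 0 <= f y) :
  forall t (x : nat -> R), in_interval T0 T1 t ->
    ex_derive (fun s => rho a f A B s x) t /\
    (forall i, (i < N)%nat ->
       ex_partial (fun y => rho a f A B t y * vel a i t y) i x) /\
    Derive (fun s => rho a f A B s x) t
    + sum_f_R0 (fun i => partial (fun y => rho a f A B t y * vel a i t y) i x)
        (N - 1) = 0.
Proof.
  intros t x Ht.
  destruct (Ha_C1 t Ht) as [Ha _].
  pose proof (Ha_nz t Ht) as Hnz.
  assert (Hf : forall y, ex_derive f y) by (intro; apply Hf_C1).
  set (c := A * x 0%nat + B * x 1%nat).
  set (h := Derive a t / a t).
  assert (Dt : is_derive (fun s => rho a f A B s x) t
   (-2 * Derive a t / a t ^ 3 * f (c / a t) + / a t ^ 2 * Derive f (c / a t) * (- c * Derive a t / a t ^ 2))).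
  { unfold rho; fold c. auto_derive.
    - repeat split; auto.
    - unfold c; change (fun y : R => a y) with a; change (fun y : R => f y) with f; unfold Rdiv; field; auto. }
  assert (E0 : forall s, (fun y => rho a f A B t y * vel a 0 t y) (upd x 0 s)
     = / a t ^ 2 * f ((A * s + B * x 1%nat) / a t) * (h * s)).
  { intro s; unfold rho, vel, upd, h; simpl; reflexivity. }
  assert (E1 : forall s, (fun y => rho a f A B t y * vel a 1 t y) (upd x 1 s)
     = / a t ^ 2 * f ((A * x 0%nat + B * s) / a t) * (h * s)).
  { intro s; unfold rho, vel, upd, h; simpl; reflexivity. }
  assert (E2 : forall i s, (2 <= i)%nat -> (fun y => rho a f A B t y * vel a i t y) (upd x i s)
     = rho a f A B t x * vel a i t x).
  { intros i s Hi; destruct i as [|[|i]]; try lia.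
    unfold rho, vel, upd; simpl; reflexivity. }
  assert (D0 : is_derive (fun s => / a t ^ 2 * f ((A * s + B * x 1%nat) / a t) * (h * s)) (x 0%nat)
     (h * rho a f A B t x + / a t ^ 2 * Derive f (c / a t) * (A / a t) * (h * x 0%nat))).
  { unfold rho; fold c. auto_derive.
    - repeat split; auto.
    - unfold c; change (fun y : R => a y) with a; change (fun y : R => f y) with f; unfold Rdiv; field; auto. }
  assert (D1 : is_derive (fun s => / a t ^ 2 * f ((A * x 0%nat + B * s) / a t) * (h * s)) (x 1%nat)
     (h * rho a f A B t x + / a t ^ 2 * Derive f (c / a t) * (B / a t) * (h * x 1%nat))).
  { unfold rho; fold c. auto_derive.
    - repeat split; auto.
    - unfold c; change (fun y : R => a y) with a; change (fun y : R => f y) with f; unfold Rdiv; field; auto. }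
  split; [eexists; exact Dt|].
  split.
  - intros i Hi. unfold ex_partial.
    destruct i as [|[|i]].
    + eapply ex_derive_ext. intro s; symmetry; apply E0. eexists; exact D0.
    + eapply ex_derive_ext. intro s; symmetry; apply E1. eexists; exact D1.
    + eapply ex_derive_ext. intro s; symmetry; apply E2; lia. apply ex_derive_const.
  - replace (N - 1)%nat with (S (N - 2)) by lia.
    rewrite sum2.
    2: { intros i Hi; unfold partial.
         rewrite (Derive_ext _ (fun _ => rho a f A B t x * vel a i t x)).
         apply Derive_const. intro s; apply E2; exact Hi. }
    unfold partial.
    rewrite (Derive_ext _ _ _ E0), (Derive_ext _ _ _ E1).
    rewrite (is_derive_unique (fun s : R => rho a f A B s x) t _ Dt), (is_derive_unique (fun s : R => / a t ^ 2 * f ((A * s + B * x 1%nat) / a t) * (h * s)) _ _ D0), (is_derive_unique (fun s : R => / a t ^ 2 * f ((A * x 0%nat + B * s) / a t) * (h * s)) _ _ D1).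
    unfold rho, h, c. field; auto.
Qed.
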